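(* Let $X$ be a Polish space, $g,h:X\to\mathbb R$ and $\varepsilon>0$. For every closed set $P$, \[\delta(gh,\varepsilon,P)\subseteq\delta_h(g,\tfrac{\varepsilon}{2},P)\cup\delta_g(h,\tfrac{\varepsilon}{2},P),\] and hence, for every countable ordinal $\alpha$, \[\delta^{\omega^\alpha}(gh,\varepsilon,P)\subseteq\delta_h^{\omega^\alpha}(g,\tfrac{\varepsilon}{2},P)\cup\delta_g^{\omega^\alpha}(h,\tfrac{\varepsilon}{2},P).\]
   Context: For real functions $u,v$ on $X$, $\eta>0$ and closed $P$, $O_u(v,\eta,P)$ is the set of $x\in P$ such that every open neighbourhood $U$ of $x$ contains some $y\in U\cap P$ with $|v(y)-v(x)|\,(|u(y)|\vee|u(x)|)\ge\eta$, and $\delta_u(v,\eta,P)=\overline{O_u(v,\eta,P)}$; with $u\equiv1$ this is written $\delta(v,\eta,P)$. Iterates of a derivation $P\mapsto\delta(P)$: $\delta^0(P)=P$, $\delta^{\alpha+1}(P)=\delta(\delta^\alpha(P))$, intersections at limit ordinals; $\delta_u^\alpha(v,\eta,P)$ denotes the $\alpha$-th iterate of $\delta_u(v,\eta,\cdot)$ applied to $P$. *)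

(* Defs.v *)
From Stdlib Require Import Reals.
Open Scope R_scope.

Section Metric.
Context {X : Type} (d : X -> X -> R).

Definition is_metric : Prop :=
  (forall x y, 0 <= d x y) /\ (forall x y, d x y = 0 <-> x = y) /\
  (forall x y, d x y = d y x) /\ (forall x y z, d x z <= d x y + d y z).

Definition cauchy_seq (u : nat -> X) : Prop :=
  forall eps, 0 < eps -> exists N, forall m n, (N <= m)%nat -> (N <= n)%nat ->
    d (u m) (u n) < eps.

Definition seq_converges (u : nat -> X) (l : X) : Prop :=
  forall eps, 0 < eps -> exists N, forall n, (N <= n)%nat -> d (u n) l < eps.

Definition complete : Prop :=
  forall u, cauchy_seq u -> exists l, seq_converges u l.

(* a countable dense subset, enumerated with possible gaps (allows X empty) *)
Definition separable : Prop :=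
  exists s : nat -> option X, forall x eps, 0 < eps ->
    exists n y, s n = Some y /\ d x y < eps.

Definition polish : Prop := is_metric /\ complete /\ separable.

Definition is_open (U : X -> Prop) : Prop :=
  forall x, U x -> exists r, 0 < r /\ forall y, d x y < r -> U y.

Definition is_closed (P : X -> Prop) : Prop := is_open (fun x => ~ P x).

Definition closure (A : X -> Prop) : X -> Prop :=
  fun x => forall U, is_open U -> U x -> exists y, U y /\ A y.

Definition O_set (u v : X -> R) (eta : R) (P : X -> Prop) : X -> Prop :=
  fun x => P x /\ forall U, is_open U -> U x ->
    exists y, U y /\ P y /\
      Rabs (v y - v x) * Rmax (Rabs (u y)) (Rabs (u x)) >= eta.

Definition delta_u (u v : X -> R) (eta : R) (P : X -> Prop) : X -> Prop :=
  closure (O_set u v eta P).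

Definition delta (v : X -> R) (eta : R) (P : X -> Prop) : X -> Prop :=
  delta_u (fun _ => 1) v eta P.

End Metric.

Definition subset {X : Type} (A B : X -> Prop) : Prop := forall x, A x -> B x.
Definition union {X : Type} (A B : X -> Prop) : X -> Prop := fun x => A x \/ B x.

(* Countable ordinals as Brouwer trees: zero, successor, sup of a sequence. *)
Inductive ord : Type :=
| OZ : ord
| OS : ord -> ord
| OL : (nat -> ord) -> ord.

Fixpoint oadd (a b : ord) : ord :=
  match b with
  | OZ => a
  | OS b' => OS (oadd a b')
  | OL f => OL (fun n => oadd a (f n))
  end.

Fixpoint omul_nat (a : ord) (n : nat) : ord :=
  match n with
  | O => OZ
  | S n' => oadd (omul_nat a n') a
  end.

Fixpoint oexp_omega (a : ord) : ord :=
  match a with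
  | OZ => OS OZ
  | OS a' => OL (fun n => omul_nat (oexp_omega a') n)
  | OL f => OL (fun n => oexp_omega (f n))
  end.

Fixpoint iter_deriv {X : Type} (D : (X -> Prop) -> (X -> Prop)) (a : ord)
  (P : X -> Prop) : X -> Prop :=
  match a with
  | OZ => P
  | OS a' => D (iter_deriv D a' P)
  | OL f => fun x => forall n, iter_deriv D (f n) P x
  end.

(* Main.v *)
Require Import Defs.
From Stdlib Require Import Reals Lra Lia Classical FunctionalExtensionality PropExtensionality.
Open Scope R_scope.

Section Topo.
Context {X : Type} (d : X -> X -> R).

Lemma open_inter (U V : X -> Prop) : is_open d U -> is_open d V ->
  is_open d (fun y => U y /\ V y).
Proof.
  intros HU HV x [Ux Vx].
  destruct (HU x Ux) as [r1 [Hr1 H1]]. destruct (HV x Vx) as [r2 [Hr2 H2]].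
  exists (Rmin r1 r2). split; [apply Rmin_pos; auto|].
  intros y Hy. split.
  - apply H1. apply Rlt_le_trans with (1 := Hy). apply Rmin_l.
  - apply H2. apply Rlt_le_trans with (1 := Hy). apply Rmin_r.
Qed.

Lemma closure_closed A : is_closed d (closure d A).
Proof.
  intros x Hx. apply not_all_ex_not in Hx as [U HU].
  apply imply_to_and in HU as [oU HU]. apply imply_to_and in HU as [Ux HU].
  destruct (oU x Ux) as [r [Hr Hb]]. exists r. split; [exact Hr|].
  intros y Hy Hcl. destruct (Hcl U oU (Hb y Hy)) as [z Hz]. apply HU. exists z; auto.
Qed.

Lemma closure_mono (A B : X -> Prop) : subset A B -> subset (closure d A) (closure d B).
Proof. intros H x Hx U oU Ux. destruct (Hx U oU Ux) as [y [? ?]]. exists y; auto. Qed.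

Lemma closure_of_closed A : is_closed d A -> subset (closure d A) A.
Proof.
  intros HA x Hx. apply NNPP. intros nA.
  destruct (Hx (fun y => ~ A y) HA nA) as [y [? ?]]. auto.
Qed.

Lemma closure_union A B : subset (closure d (union A B)) (union (closure d A) (closure d B)).
Proof.
  intros x Hx. apply NNPP. intros Hn. apply not_or_and in Hn as [nA nB].
  apply not_all_ex_not in nA as [U HU]. apply imply_to_and in HU as [oU HU].
  apply imply_to_and in HU as [Ux HU].
  apply not_all_ex_not in nB as [V HV]. apply imply_to_and in HV as [oV HV].
  apply imply_to_and in HV as [Vx HV].
  destruct (Hx _ (open_inter U V oU oV) (conj Ux Vx)) as [y [[Uy Vy] [Ay|By]]].
  - apply HU; exists y; auto.
  - apply HV; exists y; auto.
Qed.

Lemma closed_ext (A B : X -> Prop) : (forall y, A y <-> B y) -> is_closed d A -> is_closed d B.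
Proof.
  intros E HA x nB. destruct (HA x) as [r [Hr H]]. { rewrite E; auto. }
  exists r; split; auto. intros y Hy. rewrite <- E. auto.
Qed.

Lemma closed_union A B : is_closed d A -> is_closed d B -> is_closed d (union A B).
Proof.
  intros HA HB x Hx. unfold union in Hx. apply not_or_and in Hx as [nA nB].
  destruct (open_inter _ _ HA HB x (conj nA nB)) as [r [Hr H]].
  exists r; split; auto. intros y Hy [?|?]; destruct (H y Hy); auto.
Qed.

Lemma closed_inter A B : is_closed d A -> is_closed d B -> is_closed d (fun y => A y /\ B y).
Proof.
  intros HA HB x Hx. apply not_and_or in Hx as [nA|nB].
  - destruct (HA x nA) as [r [Hr H]]. exists r; split; auto. intros y Hy [? ?]. apply (H y Hy); auto.
  - destruct (HB x nB) as [r [Hr H]]. exists r; split; auto. intros y Hy [? ?]. apply (H y Hy); auto.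
Qed.

Lemma closed_cint (F : nat -> X -> Prop) : (forall n, is_closed d (F n)) ->
  is_closed d (fun y => forall n, F n y).
Proof.
  intros HF x Hx. apply not_all_ex_not in Hx as [n Hn].
  destruct (HF n x Hn) as [r [Hr H]]. exists r; split; auto.
  intros y Hy Hall. apply (H y Hy). auto.
Qed.

Definition osc (u v : X -> R) (x y : X) := Rabs (v y - v x) * Rmax (Rabs (u y)) (Rabs (u x)).

Lemma nbhd_notO u v eta P x : P x -> ~ O_set d u v eta P x ->
  exists W, is_open d W /\ W x /\ forall y, W y -> P y -> osc u v x y < eta.
Proof.
  intros Px nO. assert (nO' : ~ (forall U, is_open d U -> U x -> exists y, U y /\ P y /\
      Rabs (v y - v x) * Rmax (Rabs (u y)) (Rabs (u x)) >= eta)) by (intro; apply nO; split; auto).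
  apply not_all_ex_not in nO' as [W HW]. apply imply_to_and in HW as [oW HW].
  apply imply_to_and in HW as [Wx HW]. exists W; repeat split; auto.
  intros y Wy Py. apply Rnot_ge_lt. intro Hge. apply HW. exists y; auto.
Qed.

Lemma nbhd_closed u v eta P x : is_closed d P -> ~ O_set d u v eta P x ->
  exists W, is_open d W /\ W x /\ forall y, W y -> P y -> osc u v x y < eta.
Proof.
  intros HP nO. destruct (classic (P x)) as [Px|nPx].
  - apply nbhd_notO; auto.
  - exists (fun y => ~ P y). repeat split; auto. intros y ? ?; contradiction.
Qed.

Lemma O_union u v eta A B : is_closed d A -> is_closed d B ->
  subset (O_set d u v eta (union A B)) (union (O_set d u v eta A) (O_set d u v eta B)).
Proof.
  intros HA HB x [Hx HU].
  destruct (classic (O_set d u v eta A x)) as [?|nA]; [left; auto|].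
  destruct (classic (O_set d u v eta B x)) as [?|nB]; [right; auto|]. exfalso.
  destruct (nbhd_closed u v eta A x HA nA) as [W1 [o1 [W1x H1]]].
  destruct (nbhd_closed u v eta B x HB nB) as [W2 [o2 [W2x H2]]].
  destruct (HU _ (open_inter _ _ o1 o2) (conj W1x W2x)) as [y [[Wy1 Wy2] [[Ay|By] Hge]]].
  - specialize (H1 y Wy1 Ay). unfold osc in H1. lra.
  - specialize (H2 y Wy2 By). unfold osc in H2. lra.
Qed.

Lemma O_mono u v eta A B : subset A B -> subset (O_set d u v eta A) (O_set d u v eta B).
Proof.
  intros H x [Ax HU]. split; auto. intros U oU Ux. destruct (HU U oU Ux) as [y [? [? ?]]].
  exists y; auto.
Qed.

Lemma O_sub u v eta A : subset (O_set d u v eta A) A.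
Proof. intros x [? ?]; auto. Qed.

Lemma prod_bound (g h : X -> R) x y :
  Rabs (g y * h y - g x * h x) <= osc h g x y + osc g h x y.
Proof.
  unfold osc.
  replace (g y * h y - g x * h x) with ((g y - g x) * h y + g x * (h y - h x)) by ring.
  eapply Rle_trans; [apply Rabs_triang|]. rewrite !Rabs_mult.
  apply Rplus_le_compat.
  - apply Rmult_le_compat_l; [apply Rabs_pos|apply Rmax_l].
  - rewrite Rmult_comm. apply Rmult_le_compat_l; [apply Rabs_pos|apply Rmax_r].
Qed.

Lemma O_prod (g h : X -> R) eps P :
  subset (O_set d (fun _ => 1) (fun x => g x * h x) eps P)
    (union (O_set d h g (eps/2) P) (O_set d g h (eps/2) P)).
Proof.
  intros x [Px HU].
  destruct (classic (O_set d h g (eps/2) P x)) as [?|nA]; [left; auto|].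
  destruct (classic (O_set d g h (eps/2) P x)) as [?|nB]; [right; auto|]. exfalso.
  destruct (nbhd_notO h g (eps/2) P x Px nA) as [W1 [o1 [W1x H1]]].
  destruct (nbhd_notO g h (eps/2) P x Px nB) as [W2 [o2 [W2x H2]]].
  destruct (HU _ (open_inter _ _ o1 o2) (conj W1x W2x)) as [y [[Wy1 Wy2] [Py Hge]]].
  specialize (H1 y Wy1 Py). specialize (H2 y Wy2 Py).
  pose proof (prod_bound g h x y).
  rewrite Rabs_R1, Rmax_left in Hge by lra. lra.
Qed.

Definition mono (D : (X -> Prop) -> X -> Prop) := forall A B, subset A B -> subset (D A) (D B).
Definition closed_val (D : (X -> Prop) -> X -> Prop) := forall A, is_closed d (D A).
Definition defl (D : (X -> Prop) -> X -> Prop) := forall A, is_closed d A -> subset (D A) A.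
Definition addit (D : (X -> Prop) -> X -> Prop) := forall A B, is_closed d A -> is_closed d B ->
  subset (D (union A B)) (union (D A) (D B)).

Lemma du_mono u v eta : mono (delta_u d u v eta).
Proof. intros A B H. apply closure_mono, O_mono, H. Qed.
Lemma du_closed u v eta : closed_val (delta_u d u v eta).
Proof. intros A. apply closure_closed. Qed.
Lemma du_defl u v eta : defl (delta_u d u v eta).
Proof.
  intros A HA x Hx. apply closure_of_closed; auto.
  eapply closure_mono; [apply O_sub|exact Hx].
Qed.
Lemma du_addit u v eta : addit (delta_u d u v eta).
Proof.
  intros A B HA HB x Hx. apply closure_union.
  eapply closure_mono; [apply O_union; auto|exact Hx].
Qed.

End Topo.

Section Tower.
Variable T : Type.
Variable E : (T -> Prop) -> T -> Prop.
Variable good : (T -> Prop) -> Prop.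
Variable Q : T -> Prop.
Hypothesis Emono : forall A B, subset A B -> subset (E A) (E B).
Hypothesis Edefl : forall A, good A -> subset (E A) A.
Hypothesis Egood : forall A, good A -> good (E A).
Hypothesis good_int : forall F : nat -> T -> Prop, (forall n, good (F n)) -> good (fun x => forall n, F n x).
Hypothesis goodQ : good Q.

Inductive tower : (T -> Prop) -> Prop :=
| tw_base : tower Q
| tw_E : forall A, tower A -> tower (E A)
| tw_int : forall F : nat -> T -> Prop, (forall n, tower (F n)) -> tower (fun x => forall n, F n x).

Lemma tower_good A : tower A -> good A.
Proof. induction 1; auto. Qed.

Lemma tower_subQ A : tower A -> subset A Q.
Proof.
  induction 1; intros x Hx; auto.
  - apply IHtower. apply (Edefl A (tower_good A H)). auto.
  - apply (H0 0%nat). auto.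
Qed.

Definition extreme c := forall x, tower x -> subset c x -> ~ subset x c -> subset c (E x).

Lemma L1 c : tower c -> extreme c -> forall x, tower x -> subset c x \/ subset x (E c).
Proof.
  intros Tc Ec x Tx. induction Tx.
  - left. apply tower_subQ; auto.
  - destruct IHTx as [Hl|Hr].
    + destruct (classic (subset A c)) as [Hs|Hs].
      * right. apply Emono; auto.
      * left. apply Ec; auto.
    + right. intros y Hy. apply Hr. apply (Edefl A (tower_good A Tx)). auto.
  - destruct (classic (exists n, subset (F n) (E c))) as [[n Hn]|Hn].
    + right. intros y Hy. apply Hn. auto.
    + left. intros y Hy n. destruct (H0 n) as [Hl|Hr].
      * auto.
      * exfalso. apply Hn. exists n; auto.
Qed.

Lemma L2 c : tower c -> extreme c.
Proof.
  induction 1.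
  - intros x Tx Hs Hn. exfalso. apply Hn. apply tower_subQ; auto.
  - intros x Tx Hs Hn. destruct (L1 A H IHtower x Tx) as [Hl|Hr].
    + apply Emono; auto.
    + contradiction.
  - intros x Tx Hs Hn.
    destruct (classic (forall n, subset x (E (F n)))) as [Hall|Hex].
    + exfalso. apply Hn. intros y Hy n. apply (Edefl (F n) (tower_good _ (H n))). apply Hall; auto.
    + apply not_all_ex_not in Hex as [n Hn'].
      destruct (L1 (F n) (H n) (H0 n) x Tx) as [HFx|HxE]; [|contradiction].
      destruct (classic (subset x (F n))) as [HxF|HxF].
      * destruct (L1 (F n) (H n) (H0 n) _ (tw_int F H)) as [Hc|Hc].
        -- exfalso. apply Hn. intros y Hy. apply Hc. apply HxF; auto.
        -- intros y Hy. eapply Emono; [exact HFx|]. apply Hc; auto.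
      * intros y Hy. apply (H0 n x Tx HFx HxF). apply Hy.
Qed.

Lemma tower_chain A B : tower A -> tower B -> subset A B \/ subset B A.
Proof.
  intros TA TB. destruct (L1 A TA (L2 A TA) B TB) as [H|H]; [left; auto|right].
  intros y Hy. apply (Edefl A (tower_good A TA)). auto.
Qed.

Lemma iter_tower t : tower (iter_deriv E t Q).
Proof.
  induction t; simpl.
  - constructor.
  - constructor; auto.
  - apply tw_int. auto.
Qed.

End Tower.

Section Ord.
Context {X : Type} (d : X -> X -> R).
Notation cl := (is_closed d).

Section OneOp.
Variable D : (X -> Prop) -> X -> Prop.
Hypothesis Dm : mono D.
Hypothesis Dc : closed_val d D.
Hypothesis Dd : defl d D.

Lemma iter_closed t Q : cl Q -> cl (iter_deriv D t Q).
Proof. intros HQ; induction t; simpl; auto. apply closed_cint; auto. Qed.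

Lemma iter_mono t A B : subset A B -> subset (iter_deriv D t A) (iter_deriv D t B).
Proof.
  intros H; induction t; simpl; auto.
  intros x Hx n. apply (H0 n). auto.
Qed.

Lemma iter_defl t Q : cl Q -> subset (iter_deriv D t Q) Q.
Proof.
  intros HQ; induction t; simpl; intros x Hx; auto.
  - apply IHt. apply (Dd _ (iter_closed t Q HQ)). auto.
  - apply (H 0%nat). auto.
Qed.

Lemma iter_oadd a b Q : iter_deriv D (oadd a b) Q = iter_deriv D b (iter_deriv D a Q).
Proof.
  induction b; simpl; auto.
  - rewrite IHb; auto.
  - apply functional_extensionality; intro x. apply propositional_extensionality.
    split; intros Hx n; specialize (Hx n); rewrite H in *; auto.
Qed.
End OneOp.

Section TwoOps.
Variables F1 F2 : (X -> Prop) -> X -> Prop.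
Hypothesis F1m : mono F1. Hypothesis F1c : closed_val d F1. Hypothesis F1d : defl d F1.
Hypothesis F2m : mono F2. Hypothesis F2c : closed_val d F2. Hypothesis F2d : defl d F2.
Variables Q1 Q2 : X -> Prop.
Hypothesis HQ1 : cl Q1. Hypothesis HQ2 : cl Q2.

Definition EP (S : X * bool -> Prop) : X * bool -> Prop :=
  fun p => if snd p then F1 (fun y => S (y, true)) (fst p) else F2 (fun y => S (y, false)) (fst p).
Definition QQ : X * bool -> Prop := fun p => if snd p then Q1 (fst p) else Q2 (fst p).
Definition goodT (S : X * bool -> Prop) :=
  cl (fun y => S (y, true)) /\ cl (fun y => S (y, false)).

Lemma EP_true t : (fun y => iter_deriv EP t QQ (y, true)) = iter_deriv F1 t Q1.
Proof.
  induction t; simpl.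
  - reflexivity.
  - unfold EP at 1; simpl. rewrite IHt. reflexivity.
  - apply functional_extensionality; intro x. apply propositional_extensionality.
    split; intros Hx n; specialize (Hx n); rewrite <- H in *; auto.
Qed.
Lemma EP_false t : (fun y => iter_deriv EP t QQ (y, false)) = iter_deriv F2 t Q2.
Proof.
  induction t; simpl.
  - reflexivity.
  - unfold EP at 1; simpl. rewrite IHt. reflexivity.
  - apply functional_extensionality; intro x. apply propositional_extensionality.
    split; intros Hx n; specialize (Hx n); rewrite <- H in *; auto.
Qed.

Lemma EP_chain s t : subset (iter_deriv EP s QQ) (iter_deriv EP t QQ) \/
                     subset (iter_deriv EP t QQ) (iter_deriv EP s QQ).
Proof.
  assert (Hm : forall A B, subset A B -> subset (EP A) (EP B)).
  { intros A B H [x b] Hx. unfold EP in *. destruct b; simpl in *.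
    + apply (F1m (fun y => A (y, true))); auto. intros y Hy; apply H; auto.
    + apply (F2m (fun y => A (y, false))); auto. intros y Hy; apply H; auto. }
  assert (Hd : forall A, goodT A -> subset (EP A) A).
  { intros A [HA1 HA2] [x b] Hx. unfold EP in *. destruct b; simpl in *.
    + exact (F1d _ HA1 x Hx).
    + exact (F2d _ HA2 x Hx). }
  assert (Hg : forall A, goodT A -> goodT (EP A)).
  { intros A _. split; unfold EP; simpl; [apply F1c|apply F2c]. }
  assert (Hi : forall F : nat -> X * bool -> Prop, (forall n, goodT (F n)) ->
     goodT (fun x => forall n, F n x)).
  { intros F HF. split; apply closed_cint; intro n; apply (HF n). }
  assert (HQ : goodT QQ) by (split; assumption).
  exact (tower_chain _ EP goodT QQ Hm Hd Hg Hi HQ _ _ (iter_tower _ _ _ s) (iter_tower _ _ _ t)).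
Qed.

Lemma split_lim (f : nat -> ord) x :
  (forall n, iter_deriv F1 (f n) Q1 x \/ iter_deriv F2 (f n) Q2 x) ->
  (forall n, iter_deriv F1 (f n) Q1 x) \/ (forall n, iter_deriv F2 (f n) Q2 x).
Proof.
  intros H. destruct (classic (forall n, iter_deriv F1 (f n) Q1 x)) as [?|Hn]; [left; auto|right].
  apply not_all_ex_not in Hn as [m Hm]. intros n.
  destruct (H n) as [Hn|Hn]; auto.
  rewrite <- EP_true in Hn, Hm. rewrite <- EP_false.
  destruct (EP_chain (f n) (f m)) as [Hs|Hs].
  - exfalso. apply Hm. apply Hs. exact Hn.
  - destruct (H m) as [Hm'|Hm'].
    + rewrite <- EP_true in Hm'. contradiction.
    + rewrite <- EP_false in Hm'. apply Hs. exact Hm'.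
Qed.
End TwoOps.
End Ord.

Section Main.
Context {X : Type} (d : X -> X -> R).
Notation cl := (is_closed d).

Lemma iter_addit D : mono D -> closed_val d D -> defl d D -> addit d D ->
  forall t A B, cl A -> cl B ->
  subset (iter_deriv D t (union A B)) (union (iter_deriv D t A) (iter_deriv D t B)).
Proof.
  intros Dm Dc Dd Da t A B HA HB. induction t; simpl.
  - intros x Hx; exact Hx.
  - intros x Hx. apply Da; try apply (iter_closed d D Dc); auto.
    eapply Dm; [exact IHt|exact Hx].
  - intros x Hx. apply (split_lim d D D Dm Dc Dd Dm Dc Dd A B HA HB o x).
    intro n. apply H. apply Hx.
Qed.

Definition FU (K : nat -> X -> Prop) (n : nat) : X -> Prop :=
  fun y => exists k, (k <= n)%nat /\ K k y.

Lemma fu_closed K : (forall k, cl (K k)) -> forall n, cl (FU K n).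
Proof.
  intros HK n. induction n.
  - apply (closed_ext d (K 0%nat)); [|auto].
    intros y; split; [intros; exists 0%nat; split; auto|].
    intros [k [Hk Hy]]. replace k with 0%nat in Hy by lia. auto.
  - apply (closed_ext d (union (FU K n) (K (S n)))); [|apply closed_union; auto].
    intros y; split.
    + intros [[k [Hk Hy]]|Hy]; [exists k; split; [lia|auto]|exists (S n); auto].
    + intros [k [Hk Hy]]. destruct (Nat.eq_dec k (S n)) as [->|Hne]; [right; auto|].
      left. exists k; split; [lia|auto].
Qed.

Lemma fu_addit G : mono G -> addit d G -> forall K, (forall k, cl (K k)) -> forall n,
  subset (G (FU K n)) (fun y => exists k, (k <= n)%nat /\ G (K k) y).
Proof.
  intros Gm Ga K HK n. induction n; intros y Hy.
  - exists 0%nat; split; auto. eapply Gm; [|exact Hy].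
    intros z [k [Hk Hz]]. replace k with 0%nat in Hz by lia. auto.
  - assert (Hs : subset (FU K (S n)) (union (FU K n) (K (S n)))).
    { intros z [k [Hk Hz]]. destruct (Nat.eq_dec k (S n)) as [->|Hne]; [right; auto|].
      left. exists k; split; [lia|auto]. }
    pose proof (Gm _ _ Hs y Hy) as Hy'.
    destruct (Ga _ _ (fu_closed K HK n) (HK (S n)) y Hy') as [H1|H1].
    + destruct (IHn y H1) as [k [Hk Hk']]. exists k; split; [lia|auto].
    + exists (S n); auto.
Qed.

Variables D D1 D2 : (X -> Prop) -> X -> Prop.
Hypothesis Dm : mono D. Hypothesis Dc : closed_val d D. Hypothesis Dd : defl d D.
Hypothesis Da : addit d D.
Hypothesis D1m : mono D1. Hypothesis D1c : closed_val d D1. Hypothesis D1d : defl d D1.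
Hypothesis D2m : mono D2. Hypothesis D2c : closed_val d D2. Hypothesis D2d : defl d D2.
Hypothesis H0 : forall Q, cl Q -> subset (D Q) (union (D1 Q) (D2 Q)).

Lemma I_succ (D' : (X -> Prop) -> X -> Prop) t n Q : iter_deriv D' (omul_nat t (S n)) Q = iter_deriv D' t (iter_deriv D' (omul_nat t n) Q).
Proof. simpl. apply iter_oadd. Qed.

Lemma I_dec (D' : (X -> Prop) -> X -> Prop) : closed_val d D' -> defl d D' -> forall t Q, cl Q -> forall m k, (m <= k)%nat ->
  subset (iter_deriv D' (omul_nat t k) Q) (iter_deriv D' (omul_nat t m) Q).
Proof.
  intros Hc Hd t Q HQ m k Hmk. induction Hmk; intros y Hy; auto.
  apply IHHmk. rewrite I_succ in Hy. eapply iter_defl; eauto. apply iter_closed; auto.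
Qed.

Theorem main_iter : forall a Q, cl Q ->
  subset (iter_deriv D (oexp_omega a) Q)
    (union (iter_deriv D1 (oexp_omega a) Q) (iter_deriv D2 (oexp_omega a) Q)).
Proof.
  induction a; intros Q HQ.
  - simpl. apply H0; auto.
  - set (t := oexp_omega a) in *. simpl. fold t. intros x Hx.
    assert (Fin : forall n y, iter_deriv D (omul_nat t n) Q y -> exists k, (k <= n)%nat /\
        iter_deriv D1 (omul_nat t k) Q y /\ iter_deriv D2 (omul_nat t (n - k)) Q y).
    { induction n; intros y Hy.
      - exists 0%nat. simpl in *. auto.
      - rewrite I_succ in Hy.
        set (K := fun k z => iter_deriv D1 (omul_nat t k) Q z /\ iter_deriv D2 (omul_nat t (n - k)) Q z).
        assert (HK : forall k, cl (K k)).
        { intro k. apply closed_inter; apply iter_closed; auto. }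
        assert (Hy1 : iter_deriv D t (FU K n) y).
        { eapply iter_mono; [exact Dm| |exact Hy]. intros z Hz. apply IHn; auto. }
        destruct (fu_addit (iter_deriv D t) (iter_mono D Dm t)
           (fun A B HA HB => iter_addit D Dm Dc Dd Da t A B HA HB) K HK n y Hy1) as [k [Hk Hk']].
        destruct (IHa (K k) (HK k) y Hk') as [HL|HR].
        + exists (S k). split; [lia|]. split.
          * rewrite I_succ. eapply iter_mono; [exact D1m| |exact HL]. intros z [? ?]; auto.
          * replace (S n - S k)%nat with (n - k)%nat by lia.
            apply (iter_defl d D1 D1c D1d t (K k) (HK k)) in HL. apply HL.
        + exists k. split; [lia|]. split.
          * apply (iter_defl d D2 D2c D2d t (K k) (HK k)) in HR. apply HR.
          * replace (S n - k)%nat with (S (n - k)) by lia. rewrite I_succ.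
            eapply iter_mono; [exact D2m| |exact HR]. intros z [? ?]; auto. }
    assert (Each : forall m, iter_deriv D1 (omul_nat t m) Q x \/ iter_deriv D2 (omul_nat t m) Q x).
    { intro m. destruct (Fin (m + m)%nat x (Hx _)) as [k [Hk [H1 H2]]].
      destruct (Compare_dec.le_lt_dec m k) as [Hmk|Hmk].
      - left. eapply I_dec; [exact D1c|exact D1d|exact HQ|exact Hmk|exact H1].
      - right. eapply I_dec; [exact D2c|exact D2d|exact HQ| |exact H2]. lia. }
    destruct (classic (forall m, iter_deriv D1 (omul_nat t m) Q x)) as [?|Hn]; [left; auto|right].
    apply not_all_ex_not in Hn as [m0 Hm0]. intros m.
    assert (Hb : iter_deriv D2 (omul_nat t (m + m0)) Q x).
    { destruct (Each (m + m0)%nat) as [Hc|Hc]; auto. exfalso. apply Hm0.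
      eapply I_dec; [exact D1c|exact D1d|exact HQ| |exact Hc]. lia. }
    eapply I_dec; [exact D2c|exact D2d|exact HQ| |exact Hb]. lia.
  - simpl. intros x Hx.
    apply (split_lim d D1 D2 D1m D1c D1d D2m D2c D2d Q Q HQ HQ (fun n => oexp_omega (o n)) x).
    intro n. apply H; auto.
Qed.
End Main.

Theorem proposition4p4 (X : Type) (d : X -> X -> R) (HX : polish d)
  (g h : X -> R) (eps : R) (Heps : 0 < eps) (P : X -> Prop)
  (HP : is_closed d P) :
  subset (delta d (fun x => g x * h x) eps P)
         (union (delta_u d h g (eps / 2) P) (delta_u d g h (eps / 2) P)) /\
  (forall alpha : ord,
     subset (iter_deriv (delta d (fun x => g x * h x) eps) (oexp_omega alpha) P)
            (union (iter_deriv (delta_u d h g (eps / 2)) (oexp_omega alpha) P)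
                   (iter_deriv (delta_u d g h (eps / 2)) (oexp_omega alpha) P))).
Proof.
  assert (Base : forall Q, subset (delta d (fun x => g x * h x) eps Q)
         (union (delta_u d h g (eps / 2) Q) (delta_u d g h (eps / 2) Q))).
  { intros Q x Hx. apply closure_union. unfold delta, delta_u in Hx.
    eapply closure_mono; [apply O_prod|exact Hx]. }
  split; [apply Base|].
  intros alpha. apply (main_iter d); auto;
    first [apply du_mono | apply du_closed | apply du_defl | apply du_addit].
Qed.
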